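(* Let $q\ge 2$, $n\ge 1$ and $\varepsilon\in\mathbb{N}$ with $\varepsilon\le n$. Let $x\in\mathbb{Z}_q^n$ be a hidden vector, and suppose the attacker has access to an oracle $\texttt{Match}_{x,\varepsilon}$ which, on a query $y\in\mathbb{Z}_q^n$, returns $1$ if $d(x,y)\le\varepsilon$ and $0$ otherwise, and which additionally reveals, whenever $d(x,y)\le\varepsilon$, the error positions $\{i: x_i\neq y_i\}$ together with the corresponding error values (enough to correct $y_i$ to $x_i$ at each such position). Then there is an adaptive query strategy that recovers $x$ using $\mathcal{O}(q^{n-\varepsilon})$ queries to $\texttt{Match}_{x,\varepsilon}$.
   Context: $\mathbb{Z}_q^n=\{0,\dots,q-1\}^n$ is equipped with the Hamming distance $d(x,y)=|\{i\in\{1,\dots,n\}: x_i\neq y_i\}|$. The attacker may choose each query adaptively based on previous oracle answers; complexity is measured as the number of oracle queries. *)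

(* Defs.v *)
From mathcomp Require Import all_boot.
Set Implicit Arguments. Unset Strict Implicit. Unset Printing Implicit Defensive.

Definition vec (n q : nat) := {ffun 'I_n -> 'I_q}.

Definition hdist (n q : nat) (x y : vec n q) : nat := #|[set i | x i != y i]|.

(* Answer of Match_{x,eps}: None = "0" (d(x,y) > eps);
   Some e = "1", where e i = Some (x i) at each error position i (x i != y i)
   and e i = None elsewhere: error positions together with correcting values. *)
Definition answer (n q : nat) := option {ffun 'I_n -> option 'I_q}.

Definition match_oracle (n q eps : nat) (x : vec n q) (y : vec n q) : answer n q :=
  if hdist x y <= eps then
    Some [ffun i => if x i != y i then Some (x i) else None]
  else None.

Inductive strategy (n q : nat) : Type :=
  | Output : vec n q -> strategy n q
  | Query : vec n q -> (answer n q -> strategy n q) -> strategy n q.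

Fixpoint run (n q eps : nat) (x : vec n q) (s : strategy n q) : vec n q * nat :=
  match s with
  | Output g => (g, 0)
  | Query y k => let r := run eps x (k (match_oracle eps x y)) in (r.1, r.2.+1)
  end.

(* Main.v *)
Require Import Defs.
From mathcomp Require Import all_boot.
Set Implicit Arguments. Unset Strict Implicit. Unset Printing Implicit Defensive.

Section S.
Variables (n q eps : nat).

Definition correct (y : vec n q) (e : {ffun 'I_n -> option 'I_q}) : vec n q :=
  [ffun i => odflt (y i) (e i)].

Fixpoint strat (d : vec n q) (l : seq (vec n q)) : strategy n q :=
  match l with
  | [::] => Output d
  | y :: l' => Query y (fun a => match a with
                                 | Some e => Output (correct y e)
                                 | None => strat d l' end)
  end.

Lemma strat_ok d x l : has (fun y => hdist x y <= eps) l ->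
  (run eps x (strat d l)).1 = x /\ (run eps x (strat d l)).2 <= size l.
Proof.
elim: l => //= y l IH.
rewrite /match_oracle.
case: ifP => H /=.
  move=> _; split => //.
  apply/ffunP => i; rewrite !ffunE /=.
  by case: eqVneq => [->|].
by move=> /IH [-> h]; split.
Qed.
End S.

Lemma card_ge (n k : nat) : k <= n ->
  #|[set i : 'I_n | k <= i]| = n - k.
Proof.
move=> kn.
rewrite cardE.
have -> : size (enum [set i : 'I_n | k <= i]) = count (fun i : nat => k <= i) (iota 0 n).
  rewrite -val_enum_ord count_map /enum_mem size_filter.
  rewrite (@eq_filter _ _ predT) ?filter_predT //; apply: eq_count => i /=; by rewrite inE.
rewrite -(subnKC kn) iotaD count_cat add0n.
have -> : count (fun i : nat => k <= i) (iota 0 k) = 0.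
  apply/eqP; rewrite -leqn0 leqNgt -has_count; apply/hasPn => i.
  by rewrite mem_iota add0n -ltnNge => /andP [_ ->].
rewrite add0n (eq_in_count (a2 := predT)); last first.
  by move=> i; rewrite mem_iota => /andP [->].
by rewrite count_predT size_iota addKn.
Qed.

Theorem theorem3 :
  exists C : nat,
  forall (q n eps : nat), 2 <= q -> 1 <= n -> eps <= n ->
  exists s : strategy n q,
    forall x : vec n q,
      (run eps x s).1 = x /\ (run eps x s).2 <= C * q ^ (n - eps).
Proof.
exists 1 => q n eps hq hn he.
have z : 'I_q by exact: Ordinal (ltnW hq).
pose ext (p : {ffun 'I_(n - eps) -> 'I_q}) : vec n q :=
  [ffun i : 'I_n => match @insub nat (fun m => m < n - eps) 'I_(n - eps) (val i) with
                    | Some j => p j | None => z end].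
pose l := map ext (enum {ffun 'I_(n - eps) -> 'I_q}).
exists (strat [ffun => z] l) => x.
have [-> h] : (run eps x (strat [ffun => z] l)).1 = x /\
              (run eps x (strat [ffun => z] l)).2 <= size l.
  apply: strat_ok.
  apply/hasP.
  exists (ext [ffun j : 'I_(n - eps) => x (widen_ord (leq_subr eps n) j)]).
    by rewrite /l map_f // mem_enum.
  rewrite /hdist.
  have E : #|[set i : 'I_n | n - eps <= i]| = eps by rewrite card_ge ?leq_subr // subKn.
  rewrite -[X in _ <= X]E.
  apply: subset_leq_card; apply/subsetP => i.
  rewrite !inE ffunE.
  case: insubP => [j jlt vj|]; last by rewrite -leqNgt.
  rewrite ffunE; apply: contraNT => _.
  by apply/eqP; congr (x _); apply: val_inj.
split => //.
by rewrite mul1n (leq_trans h) // /l size_map -cardE card_ffun !card_ord.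
Qed.
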